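(* Let $k$ be a field of characteristic $p>0$, let $d_1,\ldots,d_n$ be positive integers and $A = k[x_1,\ldots,x_n]/(x_1^{d_1}, \ldots, x_n^{d_n})$. Write $d_i = N_i p + r_i$ with $N_i$ integers and $0 < r_i \le p$. Let $\Lambda\subseteq\{1,\ldots,n\}$ be an index set such that $d_i>r_i$ for all $i \in \Lambda$, and let $m=\sum_{i=1}^nN_i-|\Lambda|+1$. If \[\sum_{i \in \Lambda}r_i \le \frac{\sum_{i=1}^n(d_i-1)-mp}{2}, \] or equivalently \[ \sum_{i \in \Lambda}r_i \le \sum_{i \notin \Lambda} r_i -n+(|\Lambda|-1)p, \] then $A$ fails to have the strong Lefschetz property.
   Context: $A$ is graded by degree, $A=\bigoplus_{i\ge0} A_i$. A linear map has maximal rank if it is injective or surjective. A graded artinian algebra $A$ has the strong Lefschetz property if there is a linear form $\ell\in A_1$ such that for all $i\ge 0$ and all $m\ge 1$ the map $A_i\to A_{i+m}$, $a\mapsto \ell^m a$, has maximal rank. *)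

(* Defs.v *)
From HB Require Import structures.
From mathcomp Require Import all_boot all_order all_algebra.
Set Implicit Arguments. Unset Strict Implicit. Unset Printing Implicit Defensive.
Import Order.TTheory GRing.Theory Num.Theory.
Local Open Scope ring_scope.

(* The algebra A = k[x_1..x_n]/(x_1^{d_1},...,x_n^{d_n}) is modelled through
   its monomial basis: the standard monomials x^a with 0 <= a_i < d_i. *)
Definition mono (n : nat) (d : 'I_n -> nat) := {dffun forall i : 'I_n, 'I_(d i)}.

Definition mdeg (n : nat) (d : 'I_n -> nat) (a : mono d) : nat :=
  (\sum_(i < n) (a i : nat))%N.

Definition Alg (k : fieldType) (n : nat) (d : 'I_n -> nat) := {ffun mono d -> k}.

(* multiplication in A: product of polynomials, monomials outside the box
   (i.e. in the ideal (x_i^{d_i})) are discarded *)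
Definition mulA (k : fieldType) (n : nat) (d : 'I_n -> nat) (f g : Alg k d)
  : Alg k d :=
  [ffun c : mono d => \sum_(a : mono d) \sum_(b : mono d)
      (if [forall i, (a i + b i)%N == (c i : nat)] then f a * g b else 0)].

Definition homog (k : fieldType) (n : nat) (d : 'I_n -> nat) (i : nat) (f : Alg k d)
  : Prop := forall a : mono d, f a != 0 -> mdeg a = i.

Definition max_rank (k : fieldType) (n : nat) (d : 'I_n -> nat)
  (phi : Alg k d -> Alg k d) (i j : nat) : Prop :=
  (forall f g, homog i f -> homog i g -> phi f = phi g -> f = g) \/
  (forall h, homog j h -> exists2 f, homog i f & phi f = h).

Definition mul_pow (k : fieldType) (n : nat) (d : 'I_n -> nat) (l : Alg k d) (m : nat)
  (f : Alg k d) : Alg k d := iter m (mulA l) f.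

Definition SLP (k : fieldType) (n : nat) (d : 'I_n -> nat) : Prop :=
  exists2 l : Alg k d, homog 1 l &
    forall i m : nat, (1 <= m)%N -> max_rank (mul_pow l m) i (i + m).

(* Main.v *)
Require Import Defs.
From HB Require Import structures.
From mathcomp Require Import all_boot all_order all_algebra.
Import Order.TTheory GRing.Theory Num.Theory.
Local Open Scope ring_scope.
From mathcomp Require Import zify.
Require Import Defs.
Set Implicit Arguments. Unset Strict Implicit. Unset Printing Implicit Defensive.

Lemma frob_comm (R : pzRingType) (p : nat) (x y : R) :
  prime p -> p%:R = 0 :> R -> GRing.comm x y -> (x + y) ^+ p = x ^+ p + y ^+ p.
Proof.
move=> pp p0 cxy.
have defp := prednK (prime_gt0 pp).
rewrite exprDn_comm // big_ord_recr subnn -defp big_ord_recl /= defp.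
rewrite subn0 mulr1 mul1r bin0 binn big1 ?addr0 // => i _.
have /dvdnP[q ->] : (p %| 'C(p, bump 0 i))%N.
  apply: prime_dvd_bin => //; rewrite /bump /= add1n -{2}defp ltnS (valP i) //.
by rewrite -mulr_natr natrM p0 !mulr0.
Qed.

Lemma frob_sum (R : pzRingType) (p : nat) (m : nat) (F : 'I_m -> R) :
  prime p -> p%:R = 0 :> R -> (forall i j, GRing.comm (F i) (F j)) ->
  (\sum_(i < m) F i) ^+ p = \sum_(i < m) F i ^+ p.
Proof.
move=> pp p0; elim: m F => [|m IH] F cF.
  by rewrite !big_ord0 expr0n; case: p pp {p0} => //.
rewrite !big_ord_recr /= frob_comm //; last first.
  by apply/commr_sym/commr_sum => i _; apply: cF.
by rewrite IH // => i j; apply: cF.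
Qed.


Definition Sb n (d : 'I_n -> nat) (i : 'I_n) (b c : mono d) : bool :=
  [forall j, (c j : nat) == (b j + (j == i))%N].

Definition Smx (k : fieldType) n (d : 'I_n -> nat) (i : 'I_n) : 'M[k]_#|mono d| :=
  \matrix_(x, y) (Sb i (enum_val x) (enum_val y))%:R.

Definition coef (k : fieldType) n (d : 'I_n -> nat) (l : Alg k d) (i : 'I_n) : k :=
  \sum_(a : mono d | (a i : nat) == 1%N) l a.

Definition Tmx (k : fieldType) n (d : 'I_n -> nat) (l : Alg k d) : 'M[k]_#|mono d| :=
  \sum_(i < n) coef l i *: Smx k d i.

Definition vec (k : fieldType) n (d : 'I_n -> nat) (F : Alg k d) : 'rV[k]_#|mono d| :=
  \row_x F (enum_val x).

Lemma vec_inj (k : fieldType) n (d : 'I_n -> nat) (F G : Alg k d) :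
  vec F = vec G -> F = G.
Proof.
move=> e; apply/ffunP => a.
by have := congr1 (fun v : 'rV_ _ => v 0 (enum_rank a)) e; rewrite !mxE enum_rankK.
Qed.

Lemma mdeg1 n (d : 'I_n -> nat) (a : mono d) :
  mdeg a = 1%N -> exists i0, forall j, (a j : nat) = (j == i0).
Proof.
rewrite /mdeg => h.
have [i0 hi0] : exists i0, (0 < a i0)%N.
  apply/existsP; apply: contraT; rewrite negb_exists => /forallP H.
  by move: h; rewrite big1 // => i _; have := H i; rewrite lt0n negbK => /eqP.
exists i0; move: h; rewrite (bigD1 i0) //= => h j.
have rest : (\sum_(i < n | i != i0) (a i : nat) = 0)%N.
  by move: h hi0; set s := (\sum_(i < n | i != i0) _)%N; lia.
case: (eqVneq j i0) => [->|ne]; first by move: h hi0; rewrite rest; lia.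
move/eqP: rest; rewrite sum_nat_eq0 => /forallP /(_ j); rewrite ne /= => /eqP.
by [].
Qed.

Lemma vec_mulA (k : fieldType) n (d : 'I_n -> nat) (l F : Alg k d) :
  homog 1%N l -> vec (mulA l F) = vec F *m Tmx l.
Proof.
move=> hl; apply/rowP => y; rewrite !mxE ffunE.
rewrite (reindex (@enum_rank _)) /=; last by apply: onW_bij; apply: enum_rank_bij.
rewrite exchange_big /=; apply: eq_bigr => b _.
rewrite mxE enum_rankK /Tmx summxE big_distrr /=.
under [RHS]eq_bigr => i _ do rewrite mxE /Smx mxE enum_rankK /coef mulr_suml mulr_sumr.
under [RHS]eq_bigr => i _ do rewrite big_mkcond /=.
rewrite [RHS]exchange_big /=; apply: eq_bigr => a _.
have [la0|la0] := eqVneq (l a) 0.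
  rewrite la0 mul0r if_same big1 // => i _.
  by case: ifP => _; rewrite ?mul0r ?mulr0.
have [i0 ha] := mdeg1 (hl a la0).
rewrite (bigD1 i0) //= ha eqxx /=.
rewrite big1 ?addr0; last first.
  by move=> i ne; rewrite ha eq_sym (negPf ne).
have -> : [forall i, (a i + b i)%N == enum_val y i] = Sb i0 b (enum_val y).
  by apply: eq_forallb => j; rewrite ha addnC eq_sym.
by case: (Sb _ _ _); rewrite ?mulr1 ?mulr0 ?mul1r ?mul0r // mulrC.
Qed.


Definition dn n (d : 'I_n -> nat) (c : mono d) (j : 'I_n) : mono d :=
  [ffun t => Ordinal (leq_ltn_trans (leq_subr (t == j) (c t)) (ltn_ord (c t)))].

Lemma dnE n (d : 'I_n -> nat) (c : mono d) j t : (dn c j t : nat) = (c t - (t == j))%N.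
Proof. by rewrite /dn ffunE. Qed.

Lemma mono_eq n (d : 'I_n -> nat) (a b : mono d) : (forall t, (a t : nat) = b t) -> a = b.
Proof. by move=> h; apply/ffunP => t; apply/val_inj; rewrite /= h. Qed.

Lemma SmxE (k : fieldType) n (d : 'I_n -> nat) i (b c : mono d) :
  Smx k d i (enum_rank b) (enum_rank c) = (Sb i b c)%:R.
Proof. by rewrite mxE !enum_rankK. Qed.

Lemma SSE (k : fieldType) n (d : 'I_n -> nat) i j (x z : 'I_#|mono d|) :
  (Smx k d i *m Smx k d j) x z =
  [forall t, (enum_val z t : nat) == (enum_val x t + (t == i) + (t == j))%N]%:R.
Proof.
rewrite mxE (reindex (@enum_rank _)) /=; last by apply: onW_bij; apply: enum_rank_bij.
set b := enum_val x; set c := enum_val z.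
under eq_bigr => y _ do rewrite /Smx !mxE !enum_rankK.
case: forallP => [H|H].
  have cj : forall t, (c t : nat) = (b t + (t == i) + (t == j))%N by move=> t; apply/eqP.
  rewrite (bigD1 (dn c j)) //= big1 ?addr0.
    rewrite /Sb; have -> : [forall t, (dn c j t : nat) == (b t + (t == i))%N].
      by apply/forallP => t; rewrite dnE cj; apply/eqP; lia.
    have -> : [forall t, (c t : nat) == (dn c j t + (t == j))%N]; first last.
      by rewrite mulr1.
    by apply/forallP => t; rewrite dnE cj; apply/eqP; lia.
  move=> y ne; case E1: (Sb i b y); case E2: (Sb j y c); rewrite ?mulr0 ?mul0r //.
  move/forallP: E1 => h1; move/forallP: E2 => h2.
  case/eqP: ne; apply: mono_eq => t; rewrite dnE.
  by move: (eqP (h2 t)) (eqP (h1 t)) (cj t); lia.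
rewrite big1 // => y _; case E1: (Sb i b y); case E2: (Sb j y c); rewrite ?mulr0 ?mul0r //.
move/forallP: E1 => h1; move/forallP: E2 => h2.
case: H => t; move: (eqP (h2 t)) (eqP (h1 t)) => e1 e2; apply/eqP; lia.
Qed.

Lemma S_comm (k : fieldType) n (d : 'I_n -> nat) i j :
  GRing.comm (Smx k d i) (Smx k d j).
Proof.
rewrite /GRing.comm -!mulmxE; apply/matrixP => x z; rewrite !SSE.
have -> // : [forall t, (enum_val z t : nat) == (enum_val x t + (t == i) + (t == j))%N] = [forall t, (enum_val z t : nat) == (enum_val x t + (t == j) + (t == i))%N].
by apply: eq_forallb => t; rewrite addnAC.
Qed.


Lemma exprZ_mx (k : fieldType) K (c : k) (A : 'M[k]_K) m :
  (c *: A) ^+ m = c ^+ m *: A ^+ m.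
Proof.
elim: m => [|m IH]; first by rewrite !expr0 scale1r.
by rewrite !exprS IH -!mulmxE -scalemxAl -scalemxAr scalerA.
Qed.

Lemma Tmx_frob (k : fieldType) (p : nat) n (d : 'I_n -> nat) (l : Alg k d) :
  p \in [pchar k] ->
  Tmx l ^+ p = \sum_(i < n) coef l i ^+ p *: Smx k d i ^+ p.
Proof.
move=> pc; rewrite /Tmx frob_sum //; first by apply: eq_bigr => i _; rewrite exprZ_mx.
- exact: pcharf_prime pc.
- by rewrite -scaler_nat (pcharf0 pc) scale0r.
move=> i j; rewrite /GRing.comm -!mulmxE -!scalemxAl -!scalemxAr !scalerA mulrC.
by rewrite !mulmxE (S_comm k d i j).
Qed.

Lemma nz_sum (k : fieldType) (I : finType) (F : I -> k) :
  \sum_i F i != 0 -> exists i, F i != 0.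
Proof.
case: (pickP (fun i => F i != 0)) => [i h|h]; first by exists i.
by rewrite big1 ?eqxx // => i _; have := h i; move/negbFE/eqP.
Qed.

Lemma SpowE (k : fieldType) n (d : 'I_n -> nat) i m (x z : 'I_#|mono d|) :
  (Smx k d i ^+ m) x z != 0 ->
  forall t, (enum_val z t : nat) = (enum_val x t + (t == i) * m)%N.
Proof.
elim: m z => [|m IH] z.
  rewrite expr0 mxE; case: (eqVneq x z) => [->|]; last by rewrite eqxx.
  by move=> _ t; rewrite muln0 addn0.
rewrite exprSr -mulmxE mxE => /nz_sum [y].
have [e0|ne] := eqVneq ((Smx k d i ^+ m) x y) 0; first by rewrite e0 mul0r eqxx.
rewrite /Smx mxE; case E: (Sb _ _ _); last by rewrite mulr0 eqxx.
move=> _ t; move/forallP: E => /(_ t) /eqP ->; rewrite (IH y ne t); lia.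
Qed.


Definition Wp (k : fieldType) n (d : 'I_n -> nat) (p : nat) (rho : 'I_n -> nat) (t : nat)
  (v : 'rV[k]_#|mono d|) : Prop :=
  forall x, v 0 x != 0 -> (forall j, rho j <= enum_val x j)%N /\
     (t <= \sum_(j < n) (enum_val x j - rho j) %/ p)%N.

Lemma W_S (k : fieldType) n (d : 'I_n -> nat) p rho t v i :
  (0 < p)%N -> @Wp k n d p rho t v -> Wp p rho t.+1 (v *m Smx k d i ^+ p).
Proof.
move=> p0 hv z; rewrite mxE => /nz_sum [x]; rewrite mulf_eq0 negb_or => /andP[h1 h2].
have [hr ht] := hv x h1; have ez := SpowE h2.
split=> [j|]; first by rewrite ez; move: (hr j); lia.
rewrite (bigD1 i) //= ez eqxx mul1n.
rewrite (eq_bigr (fun j => (enum_val x j - rho j) %/ p)%N); last first.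
  by move=> j /negPf nj; rewrite ez nj mul0n addn0.
move: ht; rewrite (bigD1 i) //=.
have -> : (enum_val x i + p - rho i = 1 * p + (enum_val x i - rho i))%N.
  by move: (hr i); lia.
rewrite divnMDl //; lia.
Qed.

Lemma W_add (k : fieldType) n (d : 'I_n -> nat) p rho t (u v : 'rV[k]_#|mono d|) :
  Wp p rho t u -> Wp p rho t v -> Wp p rho t (u + v).
Proof.
move=> hu hv x; rewrite mxE.
have [e|ne] := eqVneq (u 0 x) 0; first by rewrite e add0r; apply: hv.
by move=> _; apply: hu.
Qed.

Lemma W_scale (k : fieldType) n (d : 'I_n -> nat) p rho t (c : k) (v : 'rV[k]_#|mono d|) :
  Wp p rho t v -> Wp p rho t (c *: v).
Proof. by move=> hv x; rewrite mxE mulf_eq0 negb_or => /andP[_]; apply: hv. Qed.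

Lemma W_sum (k : fieldType) n (d : 'I_n -> nat) p rho t (F : 'I_n -> 'rV[k]_#|mono d|) :
  (forall i, Wp p rho t (F i)) -> Wp p rho t (\sum_(i < n) F i).
Proof.
move=> hF; apply: (big_ind (Wp p rho t)) => //; last by move=> ? ? ; apply: W_add.
by move=> x; rewrite mxE eqxx.
Qed.

Lemma W_T (k : fieldType) n (d : 'I_n -> nat) p rho t (l : Alg k d) v :
  p \in [pchar k] -> Wp p rho t v -> Wp p rho t.+1 (v *m Tmx l ^+ p).
Proof.
move=> pc hv; rewrite Tmx_frob // mulmx_sumr; apply: W_sum => i.
rewrite -scalemxAr; apply: W_scale; apply: W_S => //.
exact: prime_gt0 (pcharf_prime pc).
Qed.

Lemma W_Tpow (k : fieldType) n (d : 'I_n -> nat) p rho t (l : Alg k d) v s :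
  p \in [pchar k] -> Wp p rho t v -> Wp p rho (t + s) (v *m Tmx l ^+ (p * s)).
Proof.
move=> pc; elim: s t v => [|s IH] t v hv; first by rewrite addn0 muln0 expr0 mulmx1.
rewrite mulnS exprD -mulmxE mulmxA addnS -addSn; apply: IH.
exact: W_T.
Qed.


Definition sig n (d : 'I_n -> nat) (c : mono d) : mono d := [ffun t => rev_ord (c t)].

Lemma sigE n (d : 'I_n -> nat) (c : mono d) t : (sig c t : nat) = (d t - (c t).+1)%N.
Proof. by rewrite /sig ffunE. Qed.

Lemma sigK n (d : 'I_n -> nat) : involutive (@sig n d).
Proof.
move=> c; apply: mono_eq => t; rewrite !sigE; have := ltn_ord (c t); lia.
Qed.

Definition sg n (d : 'I_n -> nat) (x : 'I_#|mono d|) : 'I_#|mono d| :=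
  enum_rank (sig (enum_val x)).

Lemma sgK n (d : 'I_n -> nat) : involutive (@sg n d).
Proof. by move=> x; rewrite /sg enum_rankK sigK enum_valK. Qed.

Lemma Tsym (k : fieldType) n (d : 'I_n -> nat) (l : Alg k d) x z :
  Tmx l x z = Tmx l (sg z) (sg x).
Proof.
rewrite /Tmx !summxE; apply: eq_bigr => i _; rewrite !mxE /sg !enum_rankK.
congr (_ * _%:R); congr (nat_of_bool _); rewrite /Sb; apply/idP/idP => /forallP H; apply/forallP => t; move/eqP: (H t);
  rewrite !sigE; have := ltn_ord (enum_val x t); have := ltn_ord (enum_val z t);
  move: (enum_val z t) (enum_val x t) => u w;
  case: (t == i) => /=; move=> *; apply/eqP; lia.
Qed.

Lemma Tpow_sym (k : fieldType) n (d : 'I_n -> nat) (l : Alg k d) m x z :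
  (Tmx l ^+ m) x z = (Tmx l ^+ m) (sg z) (sg x).
Proof.
elim: m x z => [|m IH] x z.
  rewrite !expr0 !mxE; congr (_%:R); congr (nat_of_bool _).
  by apply/eqP/eqP => [->|/(congr1 (@sg n d))]; rewrite ?sgK.
rewrite [in LHS]exprSr [in RHS]exprS -!mulmxE !mxE.
rewrite (reindex (@sg n d)) /=; last by apply: onW_bij; apply: inv_bij; apply: sgK.
apply: eq_bigr => y _; rewrite IH Tsym sgK mulrC.
by [].
Qed.


Lemma vec_mulpow (k : fieldType) n (d : 'I_n -> nat) (l F : Alg k d) m :
  homog 1%N l -> vec (mul_pow l m F) = vec F *m Tmx l ^+ m.
Proof.
move=> hl; elim: m => [|m IH]; first by rewrite expr0 mulmx1.
by rewrite /mul_pow iterS vec_mulA // -/(mul_pow l m F) IH exprSr -mulmxE mulmxA.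
Qed.

Lemma mdeg_sig n (d : 'I_n -> nat) (c : mono d) :
  (mdeg (sig c) + mdeg c)%N = (\sum_(i < n) (d i - 1))%N.
Proof.
rewrite /mdeg -big_split /=; apply: eq_bigr => i _; rewrite sigE.
have := ltn_ord (c i); move: (c i) => u; lia.
Qed.

Lemma up_step n (d : 'I_n -> nat) (x : mono d) :
  (mdeg x < \sum_(i < n) (d i - 1))%N ->
  exists y : mono d, (forall t, x t <= y t)%N /\ mdeg y = (mdeg x).+1.
Proof.
move=> h.
have [j hj] : exists j, (x j < d j - 1)%N.
  apply/existsP; apply: contraLR h; rewrite negb_exists => /forallP H.
  rewrite -leqNgt /mdeg; apply: leq_sum => i _; have := H i; lia.
have hb : forall t, ((x t + (t == j)) < d t)%N.
  move=> t; case: (eqVneq t j) => [->|ne]; rewrite ?eqxx ?(negPf ne) /=; have := ltn_ord (x t); lia.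
exists [ffun t => Ordinal (hb t)]; split=> [t|]; first by rewrite ffunE /=; lia.
rewrite /mdeg (bigD1 j) //= [in RHS](bigD1 j) //= !ffunE /= eqxx.
rewrite (eq_bigr (fun i => (x i : nat))); first by rewrite /= addn1 addSn.
by move=> i /negPf ne; rewrite ffunE /= ne addn0.
Qed.

Lemma up_exists n (d : 'I_n -> nat) (x : mono d) e :
  (mdeg x + e <= \sum_(i < n) (d i - 1))%N ->
  exists y : mono d, (forall t, x t <= y t)%N /\ mdeg y = (mdeg x + e)%N.
Proof.
elim: e => [|e IH] h; first by exists x; rewrite addn0; split.
have [y [hy ey]] : exists y : mono d, (forall t, x t <= y t)%N /\ mdeg y = (mdeg x + e)%N.
  by apply: IH; move: h; rewrite addnS; lia.
have [z [hz ez]] : exists z : mono d, (forall t, y t <= z t)%N /\ mdeg z = (mdeg y).+1.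
  by apply: up_step; rewrite ey -addnS.
by exists z; split=> [t|]; [apply: leq_trans (hz t) | rewrite ez ey addnS].
Qed.


Lemma sumN_split n (N : 'I_n -> nat) (Lam : {set 'I_n}) :
  (forall i, i \in Lam -> 0 < N i)%N ->
  (\sum_(i < n) N i = \sum_(i < n) (N i - (i \in Lam)) + #|Lam|)%N.
Proof.
move=> hN; rewrite -sum1_card (big_mkcond (fun i => i \in Lam)) -big_split /=.
apply: eq_bigr => i _; case: (boolP (i \in Lam)) => h /=; last by rewrite !addn0 subn0.
by have := hN i h; lia.
Qed.

Lemma pot_bound n (d : 'I_n -> nat) (p : nat) (N r : 'I_n -> nat) (Lam : {set 'I_n})
   (c : mono d) (rho : 'I_n -> nat) :
  (forall t, rho t = if t \in Lam then r t else 0%N) ->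
  (0 < p)%N ->
  (forall i, d i = (N i * p + r i)%N /\ (0 < r i <= p)%N) ->
  (forall i, i \in Lam -> (r i < d i)%N) ->
  (forall t, rho t <= c t)%N ->
  (\sum_(j < n) (c j - rho j) %/ p <=
     \sum_(i < n) (N i - (i \in Lam)))%N.
Proof.
move=> hrho p0 hd hL hc; apply: leq_sum => j _; rewrite hrho.
rewrite -ltnS ltn_divLR //.
have := ltn_ord (c j); have [e hr] := hd j; have := hc j; rewrite hrho.
move: (c j) => u.
case: (boolP (j \in Lam)) => hj /=.
  have := hL j hj => h1 h2 h3.
  have hN : (0 < N j)%N by move: h1; rewrite e; case: (N j) => //= ; lia.
  nia.
rewrite subn0 mulSn; move: hr; nia.
Qed.

Lemma kernel (k : fieldType) (p : nat) n (d : 'I_n -> nat) (N r : 'I_n -> nat)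
  (Lam : {set 'I_n}) (l : Alg k d) (c : mono d) y :
  p \in [pchar k] ->
  (forall i, d i = (N i * p + r i)%N /\ (0 < r i <= p)%N) ->
  (forall i, i \in Lam -> (r i < d i)%N) ->
  (forall t, (if t \in Lam then r t else 0) <= c t)%N ->
  (Tmx l ^+ (p * (\sum_(i < n) N i - #|Lam| + 1))) (enum_rank c) y = 0.
Proof.
move=> pc hd hL hc.
have p0 : (0 < p)%N by apply: prime_gt0; apply: pcharf_prime pc.
have hN : forall i, i \in Lam -> (0 < N i)%N.
  by move=> i hi; have := hL i hi; have [e _] := hd i; rewrite e; case: (N i) => //; lia.
set rho := fun t => if t \in Lam then r t else 0%N.
have W0 : Wp (k:=k) (d:=d) p rho 0 (delta_mx 0 (enum_rank c)).
  move=> x; rewrite mxE; case: (eqVneq x (enum_rank c)) => [->|]; last by rewrite andbF eqxx.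
  by move=> _; rewrite enum_rankK; split.
have := W_Tpow (l:=l) (s:=(\sum_(i < n) N i - #|Lam| + 1)%N) pc W0.
move=> W1; apply/eqP; apply: contraT => ne.
have := W1 y; rewrite -rowE mxE => /(_ ne) [h1 h2].
have := pot_bound (rho:=rho) (fun t => erefl) p0 hd hL h1; rewrite (sumN_split hN) in h2.
move=> hb; move: h2; rewrite add0n addnK addn1 => h2.
by have := leq_trans h2 hb; rewrite ltnn.
Qed.

Unset Implicit Arguments.
Theorem lemma3p4 (k : fieldType) (p : nat) (n : nat) (d : 'I_n -> nat)
  (N r : 'I_n -> nat) (Lam : {set 'I_n}) :
  p \in [pchar k] ->
  (forall i, (0 < d i)%N) ->
  (forall i, d i = (N i * p + r i)%N /\ (0 < r i <= p)%N) ->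
  (forall i, i \in Lam -> (r i < d i)%N) ->
  let m : int := (\sum_(i < n) N i)%:Z - #|Lam|%:Z + 1 in
  2 * (\sum_(i in Lam) r i)%:Z <= (\sum_(i < n) (d i - 1)%N)%:Z - m * p%:Z ->
  ~ SLP k d.
Proof.
move=> pc hd0 hd hL m hineq [l hl H].
have p0 : (0 < p)%N by apply: prime_gt0; apply: pcharf_prime pc.
have hN : forall i, i \in Lam -> (0 < N i)%N.
  by move=> i hi; have := hL i hi; have [e _] := hd i; rewrite e; case: (N i) => //; lia.
have hrho : forall t, ((if t \in Lam then r t else 0) < d t)%N.
  by move=> t; case: ifP => [/hL //|_]; apply: hd0.
pose rho : mono d := [ffun t => Ordinal (hrho t)].
have rhoE : forall t, (rho t : nat) = if t \in Lam then r t else 0%N.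
  by move=> t; rewrite ffunE.
have mrho : mdeg rho = (\sum_(i in Lam) r i)%N.
  by rewrite /mdeg (eq_bigr _ (fun t _ => rhoE t)) [RHS]big_mkcond.
pose s := (\sum_(i < n) N i - #|Lam| + 1)%N.
have eSN := sumN_split hN.
have arith : (2 * mdeg rho + p * s <= \sum_(i < n) (d i - 1))%N.
  move: hineq; rewrite /m mrho /s eSN.
  set A := (\sum_(i < n) (N i - (i \in Lam)))%N.
  set J := (\sum_(i in Lam) r i)%N.
  set D := (\sum_(i < n) (d i - 1))%N.
  nia.
have kern : forall c : mono d, (forall t, rho t <= c t)%N ->
    forall y, (Tmx l ^+ (p * s)) (enum_rank c) y = 0.
  move=> c hc y; rewrite /s; apply: (kernel l y pc hd hL) => t; rewrite -rhoE; exact: hc.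
have ms : (1 <= p * s)%N by rewrite muln_gt0 p0 /s addn1.
case: (H (mdeg rho) (p * s)%N ms) => [Hinj|Hsurj].
- pose f : Alg k d := [ffun a => ((a == rho)%:R : k)].
  have hf : homog (mdeg rho) f.
    by move=> a; rewrite ffunE; case: (eqVneq a rho) => [->|ne] //; rewrite eqxx.
  have h0 : homog (mdeg rho) (0 : Alg k d) by move=> a; rewrite ffunE eqxx.
  have e : mul_pow l (p * s) f = mul_pow l (p * s) 0.
    apply: vec_inj; rewrite !vec_mulpow //.
    have -> : vec (0 : Alg k d) = 0 by apply/rowP => x; rewrite !mxE ffunE.
    have -> : vec f = delta_mx 0 (enum_rank rho).
      apply/rowP => x; rewrite !mxE ffunE eqxx /=.
      by rewrite -(inj_eq enum_val_inj) enum_rankK.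
    rewrite mul0mx -rowE; apply/rowP => y; rewrite !mxE kern //.
  have := congr1 (fun g : Alg k d => g rho) (Hinj _ _ hf h0 e).
  by rewrite /= !ffunE eqxx => /eqP; rewrite oner_eq0.
- have [c0 [hc0 ec0]] := up_exists (x := rho)
     (e := (\sum_(i < n) (d i - 1) - mdeg rho - p * s - mdeg rho)%N) ltac:(lia).
  pose h : Alg k d := [ffun a => ((a == sig c0)%:R : k)].
  have hh : homog (mdeg rho + p * s) h.
    move=> a; rewrite ffunE; case: (eqVneq a (sig c0)) => [->|ne]; last by rewrite eqxx.
    move=> _.
    have := mdeg_sig c0; rewrite ec0; lia.
  have [f _ ef] := Hsurj h hh.
  have := congr1 (fun g => vec g 0 (enum_rank (sig c0))) ef.
  rewrite /= vec_mulpow // [RHS]mxE enum_rankK ffunE eqxx mxE big1.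
    by move/eqP; rewrite eq_sym oner_eq0.
  move=> x _; rewrite Tpow_sym /sg enum_rankK sigK kern ?mulr0 //.
Qed.
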